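(* Let $C$ be a Reedy category, let $\Gamma$ be one of $\int N(C)$, $\int N^{-,+}(C)$, $\int N^{--,+}_+(C)$, and let $(\alpha,\theta)\colon([m],X)\to([n],Y)$ be a morphism in $\Gamma$. Then the upward interval $\{(\beta,\varphi)\in\mathrm{Hom}_\Gamma(([m],X),([n],Y)):(\alpha,\theta)\le(\beta,\varphi)\}$, with the induced order, is a bounded distributive lattice.
   Context: A Reedy category $(C,C_-,C_+)$: wide subcategories with unique factorization of every morphism as ($C_-$ then $C_+$), membership in $C_\pm$ decidable, and the relation ($x<'y$ iff non-identity $x\to y$ in $C_+$ or non-identity $y\to x$ in $C_-$) well-founded. $\Delta$: finite ordinals $[n]$ and order-preserving maps. $\int N(C)$: objects $([n],X)$ with $X\colon[n]\to C$ a functor; morphisms $([m],X)\to([n],Y)$ are $(\alpha,\theta)$, $\alpha\colon[m]\to[n]$ in $\Delta$, $\theta\colon X\Rightarrow Y\circ\alpha$; composition $(\beta,\varphi)\circ(\alpha,\theta)=(\beta\alpha,(\varphi\alpha)\circ\theta)$. $\int N^{-,+}(C)$: subcategory of objects with $X$ sending all morphisms into $C_-$ and morphisms with all $\theta_i\in C_+$. $\int N^{--,+}_+(C)$: its subcategory of objects whose $X$ reflects identities and morphisms with $\alpha$ injective. Order on hom-sets: $(\alpha,\theta)\le(\alpha',\theta')$ iff $\alpha\le\alpha'$ pointwise and $\theta'_i=Y(\alpha(i)\le\alpha'(i))\circ\theta_i$ for all $i$. *)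

(* Defs.v *)
From mathcomp Require Import all_boot.
Set Implicit Arguments. Unset Strict Implicit. Unset Printing Implicit Defensive.

Record Category := {
  Ob :> Type;
  Hom : Ob -> Ob -> Type;
  idm : forall a, Hom a a;
  comp : forall a b c, Hom b c -> Hom a b -> Hom a c;
  comp_id_l : forall a b (f : Hom a b), comp (idm b) f = f;
  comp_id_r : forall a b (f : Hom a b), comp f (idm a) = f;
  comp_assoc : forall a b c d (h : Hom c d) (g : Hom b c) (f : Hom a b),
      comp h (comp g f) = comp (comp h g) f
}.

Arguments Hom {c0} _ _.
Arguments idm {c0} a.
Arguments comp {c0 a b c} _ _.
Definition is_id (C : Category) (a b : C) (f : Hom a b) : Prop :=
  exists e : a = b, f = eq_rect a (fun x => Hom a x) (idm a) b e.

Record Reedy (C : Category) := {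
  minus : forall a b : C, Hom a b -> bool;
  plus  : forall a b : C, Hom a b -> bool;
  minus_id : forall a, minus (idm a);
  plus_id  : forall a, plus (idm a);
  minus_comp : forall a b c (g : Hom b c) (f : Hom a b),
      minus g -> minus f -> minus (comp g f);
  plus_comp : forall a b c (g : Hom b c) (f : Hom a b),
      plus g -> plus f -> plus (comp g f);
  fact_ex : forall a b (f : Hom a b),
      exists c (p : Hom a c) (q : Hom c b), [/\ minus p, plus q & comp q p = f];
  fact_uniq : forall a b c1 c2 (p1 : Hom a c1) (q1 : Hom c1 b)
      (p2 : Hom a c2) (q2 : Hom c2 b),
      minus p1 -> plus q1 -> minus p2 -> plus q2 -> comp q1 p1 = comp q2 p2 ->
      existT (fun c => (Hom a c * Hom c b)%type) c1 (p1, q1) =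
      existT (fun c => (Hom a c * Hom c b)%type) c2 (p2, q2);
  reedy_wf : well_founded (fun x y : C =>
      (exists f : Hom x y, plus f /\ ~ is_id f) \/
      (exists g : Hom y x, minus g /\ ~ is_id g))
}.

(* ---------- Functors [n] -> C (the nerve N(C)) ---------- *)
Record chain (C : Category) (n : nat) := {
  ob_at : 'I_n.+1 -> C;
  mor_at : forall i j : 'I_n.+1, (i <= j)%N -> Hom (ob_at i) (ob_at j);
  mor_at_id : forall (i : 'I_n.+1) (h : (i <= i)%N), mor_at h = idm (ob_at i);
  mor_at_comp : forall i j k : 'I_n.+1, forall (hij : (i <= j)%N) (hjk : (j <= k)%N) (hik : (i <= k)%N),
      mor_at hik = comp (mor_at hjk) (mor_at hij)
}.

(* Morphisms ([m],X) -> ([n],Y) of int N(C): pairs (alpha, theta) *)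
Definition pre_mor (C : Category) m n (X : chain C m) (Y : chain C n) :=
  { alpha : 'I_m.+1 -> 'I_n.+1 &
    forall i : 'I_m.+1, Hom (ob_at X i) (ob_at Y (alpha i)) }.

Definition is_mor (C : Category) m n (X : chain C m) (Y : chain C n)
    (p : pre_mor X Y) : Prop :=
  let alpha := projT1 p in let theta := projT2 p in
  (forall i j : 'I_m.+1, (i <= j)%N -> (alpha i <= alpha j)%N) /\
  forall (i j : 'I_m.+1) (h : (i <= j)%N) (h' : (alpha i <= alpha j)%N),
    comp (mor_at Y h') (theta i) = comp (theta j) (mor_at X h).

Inductive GammaKind := IntN | IntNmp | IntNmmpp.

Definition ob_in (C : Category) (R : Reedy C) (G : GammaKind) n (X : chain C n) : Prop :=
  match G with
  | IntN => True
  | IntNmp => forall (i j : 'I_n.+1) (h : (i <= j)%N), minus R (mor_at X h)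
  | IntNmmpp => (forall (i j : 'I_n.+1) (h : (i <= j)%N), minus R (mor_at X h)) /\
                (forall (i j : 'I_n.+1) (h : (i <= j)%N), is_id (mor_at X h) -> i = j)
  end.

Definition mor_in (C : Category) (R : Reedy C) (G : GammaKind) m n
    (X : chain C m) (Y : chain C n) (p : pre_mor X Y) : Prop :=
  is_mor p /\
  match G with
  | IntN => True
  | IntNmp => forall i, plus R (projT2 p i)
  | IntNmmpp => (forall i, plus R (projT2 p i)) /\ injective (projT1 p)
  end.

Definition mor_le (C : Category) m n (X : chain C m) (Y : chain C n)
    (p q : pre_mor X Y) : Prop :=
  (forall i, (projT1 p i <= projT1 q i)%N) /\
  forall i (h : (projT1 p i <= projT1 q i)%N),
    projT2 q i = comp (mor_at Y h) (projT2 p i).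

Section Lattice.
Variables (T : Type) (S : T -> Prop) (le : T -> T -> Prop).
Definition is_meet x y z := S z /\ le z x /\ le z y /\
  forall w, S w -> le w x -> le w y -> le w z.
Definition is_join x y z := S z /\ le x z /\ le y z /\
  forall w, S w -> le x w -> le y w -> le z w.
Definition is_bounded_distributive_lattice : Prop :=
  [/\ (forall x, S x -> le x x),
      (forall x y, S x -> S y -> le x y -> le y x -> x = y),
      (forall x y z, S x -> S y -> S z -> le x y -> le y z -> le x z),
      ((exists b, S b /\ forall x, S x -> le b x) /\
       (exists t, S t /\ forall x, S x -> le x t)) /\
      (forall x y, S x -> S y -> (exists z, is_meet x y z) /\ (exists z, is_join x y z))
    & (forall x y z a b c d e, S x -> S y -> S z ->
        is_join y z a -> is_meet x a b -> is_meet x y c -> is_meet x z d ->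
        is_join c d e -> b = e)].
End Lattice.

(* Main.v *)
Require Import Defs.
From mathcomp Require Import all_boot zify.
From Stdlib Require Import FunctionalExtensionality Classical.
Set Implicit Arguments. Unset Strict Implicit.

Lemma mor_le_refl (C : Category) m n (X : chain C m) (Y : chain C n) (q : pre_mor X Y) :
  mor_le q q.
Proof.
split=> [i|i h]; first exact: leqnn.
by rewrite mor_at_id comp_id_l.
Qed.

Lemma mor_le_trans (C : Category) m n (X : chain C m) (Y : chain C n) (q1 q2 q3 : pre_mor X Y) :
  mor_le q1 q2 -> mor_le q2 q3 -> mor_le q1 q3.
Proof.
move=> [a1 b1] [a2 b2]; split=> [i|i h]; first exact: leq_trans (a1 i) (a2 i).
rewrite (b2 i (a2 i)) (b1 i (a1 i)) comp_assoc.
by rewrite -(mor_at_comp _ _ _ h).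
Qed.

Lemma mor_le_antisym (C : Category) m n (X : chain C m) (Y : chain C n) (q1 q2 : pre_mor X Y) :
  mor_le q1 q2 -> mor_le q2 q1 -> q1 = q2.
Proof.
case: q1 => f1 g1; case: q2 => f2 g2 [/= a1 b1] [/= a2 b2].
have ef : f1 = f2.
  by apply: functional_extensionality => i; apply: ord_inj; apply/eqP; rewrite eqn_leq a1 a2.
subst f2.
have -> : g2 = g1.
  apply: functional_extensionality_dep => i.
  by rewrite (b1 i (leqnn _)) mor_at_id comp_id_l.
by [].
Qed.

Lemma le_iff (C : Category) m n (X : chain C m) (Y : chain C n) (p q1 q2 : pre_mor X Y) :
  mor_le p q1 -> mor_le p q2 ->
  (forall i, projT1 q1 i <= projT1 q2 i) -> mor_le q1 q2.
Proof.
move=> [a1 b1] [a2 b2] H; split=> // i h.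
rewrite (b2 i (a2 i)) (b1 i (a1 i)) comp_assoc.
by rewrite -(mor_at_comp _ _ _ (a2 i)).
Qed.

Lemma eq_above (C : Category) m n (X : chain C m) (Y : chain C n) (p q1 q2 : pre_mor X Y) :
  mor_le p q1 -> mor_le p q2 ->
  (forall i, projT1 q1 i = projT1 q2 i) -> q1 = q2.
Proof.
move=> h1 h2 H; apply: mor_le_antisym; apply: le_iff; eauto => i; rewrite H //.
Qed.

Definition mk (C : Category) m n (X : chain C m) (Y : chain C n) (p : pre_mor X Y)
  (f : 'I_m.+1 -> 'I_n.+1) (Hf : forall i, projT1 p i <= f i) : pre_mor X Y :=
  existT _ f (fun i => Defs.comp (mor_at Y (Hf i)) (projT2 p i)).

Lemma mk_ge (C : Category) m n (X : chain C m) (Y : chain C n) (p : pre_mor X Y) f Hf :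
  mor_le p (@mk C m n X Y p f Hf).
Proof. split=> //= i h; by rewrite (bool_irrelevance h (Hf i)). Qed.

Definition gcond (C : Category) (R : Reedy C) (G : GammaKind) m n (X : chain C m) (Y : chain C n)
  (p : pre_mor X Y) (f : 'I_m.+1 -> 'I_n.+1) : Prop :=
  match G with
  | IntN => True
  | IntNmp => forall i (h : projT1 p i <= f i), Defs.plus R (Defs.comp (mor_at Y h) (projT2 p i))
  | IntNmmpp => (forall i (h : projT1 p i <= f i), Defs.plus R (Defs.comp (mor_at Y h) (projT2 p i)))
               /\ injective f
  end.

Definition valid (C : Category) (R : Reedy C) (G : GammaKind) m n (X : chain C m) (Y : chain C n)
  (p : pre_mor X Y) (f : 'I_m.+1 -> 'I_n.+1) : Prop :=
  [/\ (forall i j : 'I_m.+1, i <= j -> f i <= f j), (forall i, projT1 p i <= f i) & gcond R G p f].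

Lemma in_valid (C : Category) (R : Reedy C) (G : GammaKind) m n (X : chain C m) (Y : chain C n)
  (p q : pre_mor X Y) : mor_in R G q -> mor_le p q -> valid R G p (projT1 q).
Proof.
move=> [[mono nat] gc] [a b]; split=> //.
case: G gc => //= [gc|[gc inj]]; last split=> //.
  by move=> i h; rewrite -b.
by move=> i h; rewrite -b.
Qed.

Lemma mk_in (C : Category) (R : Reedy C) (G : GammaKind) m n (X : chain C m) (Y : chain C n)
  (p : pre_mor X Y) f Hf : mor_in R G p -> valid R G p f -> mor_in R G (@mk C m n X Y p f Hf).
Proof.
move=> [[pmono pnat] _] [mono _ gc]; split.
  split=> //= i j h h'.
  rewrite comp_assoc -(mor_at_comp _ _ _ (leq_trans (Hf i) h')).
  rewrite -comp_assoc -(pnat i j h (pmono _ _ h)) comp_assoc -(mor_at_comp _ _ _ (leq_trans (pmono _ _ h) (Hf j))).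
  by rewrite (bool_irrelevance (leq_trans (pmono _ _ h) (Hf j)) (leq_trans (Hf i) h')).
by case: G gc => //= [[gc inj]]; split.
Qed.

Definition minf m n (f g : 'I_m.+1 -> 'I_n.+1) : 'I_m.+1 -> 'I_n.+1 :=
  fun i => if f i <= g i then f i else g i.
Definition maxf m n (f g : 'I_m.+1 -> 'I_n.+1) : 'I_m.+1 -> 'I_n.+1 :=
  fun i => if f i <= g i then g i else f i.

Lemma minfE m n (f g : 'I_m.+1 -> 'I_n.+1) i : nat_of_ord (minf f g i) = minn (f i) (g i).
Proof. rewrite /minf; case: leqP => h; lia. Qed.
Lemma maxfE m n (f g : 'I_m.+1 -> 'I_n.+1) i : nat_of_ord (maxf f g i) = maxn (f i) (g i).
Proof. rewrite /maxf; case: leqP => h; lia. Qed.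

Lemma inj_strict m n (f : 'I_m.+1 -> 'I_n.+1) :
  (forall i j : 'I_m.+1, i <= j -> f i <= f j) ->
  injective f -> forall i j : 'I_m.+1, i < j -> f i < f j.
Proof.
move=> mono inj i j lt; rewrite ltn_neqAle mono ?(ltnW lt) // andbT.
apply/negP => /eqP /ord_inj /inj e; subst j; by rewrite ltnn in lt.
Qed.

Lemma strict_inj m n (f : 'I_m.+1 -> 'I_n.+1) :
  (forall i j : 'I_m.+1, i < j -> f i < f j) -> injective f.
Proof.
move=> st i j e; case: (ltngtP i j) => h.
- by have := st _ _ h; rewrite e ltnn.
- by have := st _ _ h; rewrite e ltnn.
- exact: ord_inj.
Qed.

Lemma valid_minf (C : Category) (R : Reedy C) (G : GammaKind) m n (X : chain C m) (Y : chain C n)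
  (p : pre_mor X Y) f g : valid R G p f -> valid R G p g -> valid R G p (minf f g).
Proof.
move=> [m1 a1 c1] [m2 a2 c2]; split.
- move=> i j h; rewrite !minfE; have := m1 _ _ h; have := m2 _ _ h; lia.
- move=> i; rewrite minfE; have := a1 i; have := a2 i; lia.
- case: G c1 c2 => //= [c1 c2|[c1 i1] [c2 i2]].
    by move=> i; rewrite /minf; case: ifP => _ h; [apply: c1|apply: c2].
  split; first by move=> i; rewrite /minf; case: ifP => _ h; [apply: c1|apply: c2].
  apply: strict_inj => i j h; rewrite !minfE.
  have := inj_strict m1 i1 h; have := inj_strict m2 i2 h; lia.
Qed.

Lemma valid_maxf (C : Category) (R : Reedy C) (G : GammaKind) m n (X : chain C m) (Y : chain C n)
  (p : pre_mor X Y) f g : valid R G p f -> valid R G p g -> valid R G p (maxf f g).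
Proof.
move=> [m1 a1 c1] [m2 a2 c2]; split.
- move=> i j h; rewrite !maxfE; have := m1 _ _ h; have := m2 _ _ h; lia.
- move=> i; rewrite maxfE; have := a1 i; have := a2 i; lia.
- case: G c1 c2 => //= [c1 c2|[c1 i1] [c2 i2]].
    by move=> i; rewrite /maxf; case: ifP => _ h; [apply: c2|apply: c1].
  split; first by move=> i; rewrite /maxf; case: ifP => _ h; [apply: c2|apply: c1].
  apply: strict_inj => i j h; rewrite !maxfE.
  have := inj_strict m1 i1 h; have := inj_strict m2 i2 h; lia.
Qed.

Lemma ex_max (P : nat -> Prop) B k0 : P k0 -> (forall k, P k -> k <= B) ->
  exists k, P k /\ forall k', P k' -> k' <= k.
Proof.
move=> Pk0 bnd.
suff: forall d k, B - k = d -> P k -> exists k, P k /\ forall k', P k' -> k' <= k by apply; eauto.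
elim/ltn_ind => d IH k ed Pk.
case: (classic (exists k', P k' /\ k < k')) => [[k' [Pk' lt]]|nex].
  apply: (IH (B - k')) => //; have := bnd _ Pk'; lia.
exists k; split=> // k' Pk'; case: (leqP k' k) => // lt; exfalso; apply: nex; eauto.
Qed.

Theorem corollary4p5 (C : Category) (R : Reedy C) (G : GammaKind) (m n : nat)
    (X : chain C m) (Y : chain C n) (p : pre_mor X Y) :
  ob_in R G X -> ob_in R G Y -> mor_in R G p ->
  is_bounded_distributive_lattice
    (fun q : pre_mor X Y => mor_in R G q /\ mor_le p q) (@mor_le C m n X Y).
Proof.
move=> _ _ Hp.
set S := fun q : pre_mor X Y => mor_in R G q /\ mor_le p q.
have Smk : forall f Hf, valid R G p f -> S (@mk C m n X Y p f Hf).
  by move=> f Hf v; split; [apply: mk_in|apply: mk_ge].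
have Sval : forall q, S q -> valid R G p (projT1 q).
  by move=> q [h1 h2]; apply: in_valid.
have meetP : forall x y, S x -> S y ->
    exists z, is_meet S (@mor_le C m n X Y) x y z /\
      forall i, projT1 z i = minf (projT1 x) (projT1 y) i.
  move=> x y Sx Sy.
  have v := valid_minf (Sval _ Sx) (Sval _ Sy).
  have [_ Hf _] := v.
  exists (mk Hf); split=> //; split; first exact: Smk.
  have Sz := Smk _ Hf v.
  split; first by apply: (le_iff Sz.2 Sx.2) => i /=; rewrite minfE geq_minl.
  split; first by apply: (le_iff Sz.2 Sy.2) => i /=; rewrite minfE geq_minr.
  move=> w Sw [l1 _] [l2 _]; apply: (le_iff Sw.2 Sz.2) => i /=.
  by rewrite minfE leq_min l1 l2.
have joinP : forall x y, S x -> S y ->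
    exists z, is_join S (@mor_le C m n X Y) x y z /\
      forall i, projT1 z i = maxf (projT1 x) (projT1 y) i.
  move=> x y Sx Sy.
  have v := valid_maxf (Sval _ Sx) (Sval _ Sy).
  have [_ Hf _] := v.
  exists (mk Hf); split=> //; split; first exact: Smk.
  have Sz := Smk _ Hf v.
  split; first by apply: (le_iff Sx.2 Sz.2) => i /=; rewrite maxfE leq_maxl.
  split; first by apply: (le_iff Sy.2 Sz.2) => i /=; rewrite maxfE leq_maxr.
  move=> w Sw [l1 _] [l2 _]; apply: (le_iff Sz.2 Sw.2) => i /=.
  by rewrite maxfE geq_max l1 l2.
have meetU : forall x y z, S x -> S y -> is_meet S (@mor_le C m n X Y) x y z ->
    forall i, nat_of_ord (projT1 z i) = minn (projT1 x i) (projT1 y i).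
  move=> x y z Sx Sy [Sz [l1 [l2 u]]] i.
  have [z' [[Sz' [l1' [l2' u']]] e]] := meetP x y Sx Sy.
  have -> : z = z' by apply: mor_le_antisym; [apply: u'|apply: u].
  by rewrite e minfE.
have joinU : forall x y z, S x -> S y -> is_join S (@mor_le C m n X Y) x y z ->
    forall i, nat_of_ord (projT1 z i) = maxn (projT1 x i) (projT1 y i).
  move=> x y z Sx Sy [Sz [l1 [l2 u]]] i.
  have [z' [[Sz' [l1' [l2' u']]] e]] := joinP x y Sx Sy.
  have -> : z = z' by apply: mor_le_antisym; [apply: u|apply: u'].
  by rewrite e maxfE.
split.
- move=> x _; exact: mor_le_refl.
- move=> x y _ _; exact: mor_le_antisym.
- move=> x y z _ _ _; exact: mor_le_trans.
- split; [split|].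
  + exists p; split; first by split=> //; apply: mor_le_refl.
    by move=> x [].
  + pose P k := exists q, S q /\ \sum_(i < m.+1) nat_of_ord (projT1 q i) = k.
    have [k [[t [St et]] mx]] : exists k, P k /\ forall k', P k' -> k' <= k.
      apply: (@ex_max P (m.+1 * n)).
        by exists p; split=> //; split=> //; apply: mor_le_refl.
      move=> k [q [_ <-]].
      apply: (@leq_trans (\sum_(i < m.+1) n)).
        by apply: leq_sum => i _; rewrite -ltnS.
      by rewrite sum_nat_const card_ord.
    exists t; split=> // x Sx.
    have [j [[Sj [ltj [lxj _]]] ej]] := joinP t x St Sx.
    have hk : \sum_(i < m.+1) nat_of_ord (projT1 j i) <= k by apply: mx; exists j.
    have L := @leqif_sum _ predT (fun i => nat_of_ord (projT1 t i) == projT1 j i)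
        (fun i => nat_of_ord (projT1 t i)) (fun i => nat_of_ord (projT1 j i))
        (fun i _ => leqif_eq (eq_ind_r (fun u => _ <= u) (leq_maxl _ _) (etrans (f_equal (@nat_of_ord _) (ej i)) (maxfE _ _ i)))).
    have /forallP F : [forall (i | predT i), nat_of_ord (projT1 t i) == projT1 j i].
      by rewrite -L.2 eqn_leq L.1 et hk.
    apply: (le_iff Sx.2 St.2) => i.
    have := F i; rewrite /= => /eqP ->.
    by rewrite ej maxfE leq_maxr.
  + move=> x y Sx Sy; split.
    by have [z [h _]] := meetP x y Sx Sy; exists z.
    by have [z [h _]] := joinP x y Sx Sy; exists z.
- move=> x y z a b c d e Sx Sy Sz ja mb mc md je.
  have Sa := ja.1; have Sb := mb.1; have Sc := mc.1; have Sd := md.1.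
  apply: (eq_above Sb.2 je.1.2) => i; apply: ord_inj.
  rewrite (meetU _ _ _ Sx Sa mb) (joinU _ _ _ Sc Sd je) (joinU _ _ _ Sy Sz ja).
  by rewrite (meetU _ _ _ Sx Sy mc) (meetU _ _ _ Sx Sz md) minn_maxr.
Qed.
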